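(* For $M,N\in\Lambda$, if $M=_{\mathsf v}N$ then $\mathrm{BT}(M)=\mathrm{BT}(N)$.
   Context: Call-by-value $\lambda$-calculus with permutations: $\lambda$-terms and values are $M,N::=V\mid MN$, $V::=x\mid\lambda x.M$, up to $\alpha$-conversion. Rules: $(\beta_v)$ $(\lambda x.M)V\to M\{x:=V\}$ if $V$ is a value; $(\sigma_1)$ $(\lambda x.M)NP\to(\lambda x.MP)N$ if $x\notin\mathrm{FV}(P)$; $(\sigma_3)$ $V((\lambda x.M)N)\to(\lambda x.VM)N$ if $V$ is a value and $x\notin\mathrm{FV}(V)$. $\to_{\mathsf v}$ is their contextual closure, $\twoheadrightarrow_{\mathsf v}$ its reflexive-transitive closure, $=_{\mathsf v}$ its reflexive-symmetric-transitive closure. $\Lambda_\bot$ is the set of $\lambda$-terms possibly containing a constant $\bot$; $\sqsubseteq$ is the smallest context-closed preorder on $\Lambda_\bot$ with $\bot\sqsubseteq x$, $\bot\sqsubseteq\lambda x.M$. Approximants $\mathcal A$ ($k\ge0$): $A::=B\mid C$; $B::=x\mid\lambda x.A\mid\bot\mid xBA_1\cdots A_k$; $C::=(\lambda x.A)(yBA_1\cdots A_k)$. $\mathcal A(M)=\{A\in\mathcal A\mid\exists N\in\Lambda,\ M\twoheadrightarrow_{\mathsf v}N,\ A\sqsubseteq N\}$; the Böhm tree is $\mathrm{BT}(M)=\bigsqcup\mathcal A(M)$ (taken to be $\emptyset$ when $\mathcal A(M)=\emptyset$), so that $\mathrm{BT}(M)=\mathrm{BT}(N)$ iff $\mathcal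 A(M)=\mathcal A(N)$. *)

(* Defs.v *)
(* Call-by-value lambda-calculus with permutations,
   terms in de Bruijn notation (so terms are identified up to alpha). *)
From Stdlib Require Import Arith Relations.

Inductive term : Type :=
| Var : nat -> term
| Lam : term -> term
| App : term -> term -> term
| Bot : term.

(* Lambda: terms without the constant Bot *)
Fixpoint nobot (t : term) : Prop :=
  match t with
  | Var _ => True
  | Lam t => nobot t
  | App t u => nobot t /\ nobot u
  | Bot => False
  end.

Inductive is_value : term -> Prop :=
| val_var : forall n, is_value (Var n)
| val_lam : forall t, is_value (Lam t).

Fixpoint lift (k c : nat) (t : term) : term :=
  match t with
  | Var n => if n <? c then Var n else Var (n + k)
  | Lam t => Lam (lift k (S c) t)
  | App t u => App (lift k c t) (lift k c u)
  | Bot => Bot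
  end.

Fixpoint subst (j : nat) (s : term) (t : term) : term :=
  match t with
  | Var n => if n =? j then lift j 0 s
             else if j <? n then Var (n - 1) else Var n
  | Lam t => Lam (subst (S j) s t)
  | App t u => App (subst j s t) (subst j s u)
  | Bot => Bot
  end.

Inductive vstep_root : term -> term -> Prop :=
| r_betav : forall M V, is_value V ->
    vstep_root (App (Lam M) V) (subst 0 V M)
  (* (\x.M) N P -> (\x. M P) N   with x not free in P *)
| r_sigma1 : forall M N P,
    vstep_root (App (App (Lam M) N) P) (App (Lam (App M (lift 1 0 P))) N)
  (* V ((\x.M) N) -> (\x. V M) N   with x not free in V *)
| r_sigma3 : forall V M N, is_value V ->
    vstep_root (App V (App (Lam M) N)) (App (Lam (App (lift 1 0 V) M)) N).

Inductive vstep : term -> term -> Prop :=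
| vs_root : forall t u, vstep_root t u -> vstep t u
| vs_lam : forall t u, vstep t u -> vstep (Lam t) (Lam u)
| vs_appl : forall t u s, vstep t u -> vstep (App t s) (App u s)
| vs_appr : forall t u s, vstep t u -> vstep (App s t) (App s u).

Definition vred : term -> term -> Prop := clos_refl_trans term vstep.
Definition veq : term -> term -> Prop := clos_refl_sym_trans term vstep.

Inductive approx_le : term -> term -> Prop :=
| al_refl : forall t, approx_le t t
| al_trans : forall t u v, approx_le t u -> approx_le u v -> approx_le t v
| al_bot_var : forall n, approx_le Bot (Var n)
| al_bot_lam : forall t, approx_le Bot (Lam t)
| al_lam : forall t u, approx_le t u -> approx_le (Lam t) (Lam u)
| al_appl : forall t u s, approx_le t u -> approx_le (App t s) (App u s)
| al_appr : forall t u s, approx_le t u -> approx_le (App s t) (App s u).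

(* Approximants:
   A ::= B | C ;  B ::= x | \x.A | Bot | x B A1..Ak ;  C ::= (\x.A)(y B A1..Ak).
   is_head t  <->  t = x B A1 .. Ak  (k >= 0). *)
Inductive is_A : term -> Prop :=
| A_B : forall t, is_B t -> is_A t
| A_C : forall a h, is_A a -> is_head h -> is_A (App (Lam a) h)
with is_B : term -> Prop :=
| B_var : forall n, is_B (Var n)
| B_lam : forall a, is_A a -> is_B (Lam a)
| B_bot : is_B Bot
| B_head : forall h, is_head h -> is_B h
with is_head : term -> Prop :=
| H_base : forall n b, is_B b -> is_head (App (Var n) b)
| H_app : forall h a, is_head h -> is_A a -> is_head (App h a).

Definition approximants (M : term) (A : term) : Prop :=
  is_A A /\ exists N, nobot N /\ vred M N /\ approx_le A N.

(* BT(M) = sup A(M); BT(M) = BT(N) iff A(M) = A(N). We represent the Böhm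
   tree by the set of its approximants. *)
Definition BT (M : term) : term -> Prop := approximants M.

(* Main.v *)
Require Import Defs.
From Stdlib Require Import Arith Lia Relations Wf_nat.

Ltac dcmp := match goal with
 | |- context [?a <? ?b] => destruct (Nat.ltb_spec a b)
 | |- context [?a =? ?b] => destruct (Nat.eqb_spec a b)
 end.
Ltac db := repeat (simpl; dcmp); simpl; try (f_equal; lia); try lia.

Lemma lift0 : forall t c, lift 0 c t = t.
Proof. induction t; intros c; simpl; db; f_equal; auto. Qed.

Lemma lift_lift_fuse : forall t i j c d, d <= c -> c <= d + j ->
  lift i c (lift j d t) = lift (i + j) d t.
Proof. induction t; intros i j c d H1 H2; simpl; db; f_equal; auto.
  apply IHt; lia. Qed.

Lemma lift_lift_comm : forall t k i c d, d <= c ->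
  lift k (i + c) (lift i d t) = lift i d (lift k c t).
Proof. induction t; intros k i c d H; simpl; db; f_equal; auto.
  replace (S (i + c)) with (i + S c) by lia; apply IHt; lia. Qed.

Lemma subst_lift_cancel : forall t v c j k, c <= j -> j <= c + k ->
  subst j v (lift (S k) c t) = lift k c t.
Proof. induction t; intros v c j k H1 H2; simpl; db; f_equal; auto.
  apply IHt; lia. Qed.

Lemma subst_lift_comm : forall t s i j c, c <= j ->
  subst (i + j) s (lift i c t) = lift i c (subst j s t).
Proof. induction t; intros s i j c H; simpl.
  - db. subst. rewrite lift_lift_fuse by lia. f_equal; lia.
  - f_equal. replace (S (i + j)) with (i + S j) by lia. apply IHt; lia.
  - f_equal; auto.
  - auto. Qed.

Lemma lift_subst_comm : forall m k i c v,
  lift k (i + c) (subst i v m) = subst i (lift k c v) (lift k (S (i + c)) m).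
Proof. induction m; intros k i c v; simpl.
  - db. subst. apply lift_lift_comm; lia.
  - f_equal. replace (S (i + c)) with (S i + c) by lia. rewrite IHm. f_equal.
  - f_equal; auto.
  - auto. Qed.

Lemma subst_subst : forall m s v i j,
  subst (i + j) s (subst i v m) = subst i (subst j s v) (subst (S (i + j)) s m).
Proof. induction m; intros s v i j; simpl.
  - db.
    + subst. replace (S (i+j)) with (S (0 + (i + j))) by lia.
      rewrite subst_lift_cancel by lia. reflexivity.
    + subst. replace j with (j + 0) by lia. replace (i + (j+0)) with (i + j) by lia.
      rewrite <- subst_lift_comm by lia. f_equal; lia.
  - f_equal. replace (S (i + j)) with (S i + j) by lia. rewrite IHm. f_equal.
  - f_equal; auto.
  - auto. Qed.

Inductive star {A} (R : A -> A -> Prop) : A -> A -> Prop :=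
| st_refl : forall x, star R x x
| st_step : forall x y z, R x y -> star R y z -> star R x z.

Lemma star_trans {A} (R : A -> A -> Prop) : forall x y z, star R x y -> star R y z -> star R x z.
Proof. intros x y z H; induction H; intros; eauto using st_step. Qed.
Lemma star_one {A} (R : A -> A -> Prop) : forall x y, R x y -> star R x y.
Proof. intros; eapply st_step; eauto using st_refl. Qed.
Lemma star_map {A B} (R : A -> A -> Prop) (S : B -> B -> Prop) (f : A -> B) :
  (forall x y, R x y -> S (f x) (f y)) -> forall x y, star R x y -> star S (f x) (f y).
Proof. intros Hf x y H; induction H; eauto using st_refl, st_step. Qed.

Lemma value_lift : forall v k c, is_value v -> is_value (lift k c v).
Proof. intros v k c H; destruct H; simpl; [destruct (n <? c)|]; constructor. Qed.
Lemma value_subst : forall v s j, is_value v -> is_value s -> is_value (subst j s v).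
Proof. intros v s j H Hs; destruct H; simpl; [|constructor].
  destruct (n =? j); [apply value_lift; auto|destruct (j <? n); constructor]. Qed.

Inductive par : term -> term -> Prop :=
| p_var : forall n, par (Var n) (Var n)
| p_bot : par Bot Bot
| p_lam : forall t t', par t t' -> par (Lam t) (Lam t')
| p_app : forall t t' u u', par t t' -> par u u' -> par (App t u) (App t' u')
| p_beta : forall m m' v v', is_value v -> par m m' -> par v v' ->
    par (App (Lam m) v) (subst 0 v' m').

Lemma par_refl : forall t, par t t.
Proof. induction t; constructor; auto. Qed.

Lemma value_par : forall v v', is_value v -> par v v' -> is_value v'.
Proof. intros v v' H Hp; destruct H; inversion Hp; constructor. Qed.

Lemma par_lift : forall t t', par t t' -> forall k c, par (lift k c t) (lift k c t').
Proof. induction 1; intros k c; simpl; try constructor; auto.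
  - destruct (n <? c); constructor.
  - replace c with (0 + c) by reflexivity. rewrite lift_subst_comm. simpl.
    constructor; auto. apply value_lift; auto. Qed.

Lemma par_subst : forall t t', par t t' -> forall s s' j, is_value s -> par s s' ->
  par (subst j s t) (subst j s' t').
Proof. induction 1; intros s s' j Hs Hss; simpl; try constructor; auto.
  - destruct (n =? j); [apply par_lift; auto| destruct (j <? n); constructor].
  - replace j with (0 + j) by reflexivity. rewrite subst_subst. simpl.
    constructor; auto. apply value_subst; auto. Qed.

Lemma par_lam_inv : forall m x, par (Lam m) x -> exists m', x = Lam m' /\ par m m'.
Proof. intros m x H; inversion H; subst; eauto. Qed.

Lemma par_diamond : forall a b c, par a b -> par a c -> exists d, par b d /\ par c d.
Proof.
  intros a b c H; revert c; induction H; intros c Hc.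
  - inversion Hc; subst; eauto using p_var.
  - inversion Hc; subst; eauto using p_bot.
  - inversion Hc; subst. destruct (IHpar _ H1) as [d [? ?]]. exists (Lam d); split; constructor; auto.
  - inversion Hc; subst.
    + match goal with H1: par t ?x, H2: par u ?y |- _ => destruct (IHpar1 _ H1) as [d1 [? ?]]; destruct (IHpar2 _ H2) as [d2 [? ?]] end.
      exists (App d1 d2); split; constructor; auto.
    + destruct (par_lam_inv _ _ H) as [m1 [-> Hm1]].
      destruct (IHpar1 (Lam m')) as [d1 [Hd1 Hd1']]. constructor; auto.
      destruct (par_lam_inv _ _ Hd1) as [dm [-> Hdm]].
      destruct (par_lam_inv _ _ Hd1') as [dm' [Heq Hdm']]. injection Heq as <-.
      destruct (IHpar2 _ H6) as [d2 [? ?]].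
      exists (subst 0 d2 dm); split.
      * constructor; auto. eapply value_par; eauto.
      * apply par_subst; auto. eapply value_par; eauto.
  - inversion Hc; subst.
    + destruct (par_lam_inv _ _ H4) as [m1 [-> Hm1]].
      destruct (IHpar1 _ Hm1) as [d1 [? ?]]. destruct (IHpar2 _ H6) as [d2 [? ?]].
      exists (subst 0 d2 d1); split.
      * apply par_subst; auto. eapply value_par; eauto.
      * constructor; auto. eapply value_par; eauto.
    + destruct (IHpar1 _ H5) as [d1 [? ?]]. destruct (IHpar2 _ H7) as [d2 [? ?]].
      exists (subst 0 d2 d1); split; apply par_subst; auto; eapply value_par; eauto.
Qed.

Inductive sroot : term -> term -> Prop :=
| s1 : forall M N P, sroot (App (App (Lam M) N) P) (App (Lam (App M (lift 1 0 P))) N)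
| s3 : forall V M N, is_value V ->
    sroot (App V (App (Lam M) N)) (App (Lam (App (lift 1 0 V) M)) N).

Inductive sstep : term -> term -> Prop :=
| ss_root : forall t u, sroot t u -> sstep t u
| ss_lam : forall t u, sstep t u -> sstep (Lam t) (Lam u)
| ss_appl : forall t u s, sstep t u -> sstep (App t s) (App u s)
| ss_appr : forall t u s, sstep t u -> sstep (App s t) (App s u).

Fixpoint msr (t : term) : nat :=
  match t with
  | Var _ => 2 | Bot => 2
  | Lam t => S (msr t)
  | App t u => msr t * msr u
  end.

Lemma msr_ge2 : forall t, 2 <= msr t.
Proof. induction t; simpl; nia. Qed.

Lemma msr_lift : forall t k c, msr (lift k c t) = msr t.
Proof. induction t; intros; simpl; auto. destruct (n <? c); auto. Qed.

Lemma sstep_dec : forall t u, sstep t u -> msr u < msr t.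
Proof. induction 1.
  - destruct H; simpl; rewrite ?msr_lift;
    repeat match goal with |- context [msr ?x] => 
      lazymatch goal with H : 2 <= msr x |- _ => fail | _ => pose proof (msr_ge2 x) end end; nia.
  - simpl; lia.
  - simpl. pose proof (msr_ge2 s). nia.
  - simpl. pose proof (msr_ge2 s). nia.
Qed.

Lemma value_sstep : forall v v', is_value v -> sstep v v' -> is_value v'.
Proof. intros v v' H Hs; destruct H; inversion Hs; subst; try constructor;
  match goal with H : sroot _ _ |- _ => inversion H end. Qed.

Lemma sstep_lift : forall t u, sstep t u -> forall k c, sstep (lift k c t) (lift k c u).
Proof. induction 1; intros k c; simpl; try (constructor; auto; fail).
  destruct H; simpl; constructor.
  - replace (S c) with (1 + c) by reflexivity. rewrite lift_lift_comm by lia. constructor.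
  - replace (S c) with (1 + c) by reflexivity. rewrite lift_lift_comm by lia. constructor.
    apply value_lift; auto.
Qed.

Lemma sstep_subst : forall t u, sstep t u -> forall w j, is_value w ->
  sstep (subst j w t) (subst j w u).
Proof. induction 1; intros w j Hs; simpl; try (constructor; auto; fail).
  destruct H; simpl; constructor.
  - replace (S j) with (1 + j) by reflexivity. rewrite subst_lift_comm by lia. constructor.
  - replace (S j) with (1 + j) by reflexivity. rewrite subst_lift_comm by lia. constructor.
    apply value_subst; auto.
Qed.

Lemma sstar_lam : forall t u, star sstep t u -> star sstep (Lam t) (Lam u).
Proof. intros t u H. apply (star_map sstep sstep Lam); auto. intros; apply ss_lam; auto. Qed.
Lemma sstar_appl : forall t u s, star sstep t u -> star sstep (App t s) (App u s).
Proof. intros t u s H. apply (star_map sstep sstep (fun x => App x s)). 2: exact H. intros; apply ss_appl; auto. Qed.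
Lemma sstar_appr : forall t u s, star sstep t u -> star sstep (App s t) (App s u).
Proof. intros t u s H. apply (star_map sstep sstep (fun x => App s x)). 2: exact H. intros; apply ss_appr; auto. Qed.
Lemma sstar_lift : forall t u k c, star sstep t u -> star sstep (lift k c t) (lift k c u).
Proof. intros t u k c H. apply (star_map sstep sstep (lift k c)). 2: exact H. intros; apply sstep_lift; auto. Qed.

Lemma sstep_subst_arg : forall t s s' j, sstep s s' ->
  star sstep (subst j s t) (subst j s' t).
Proof. induction t; intros s s' j H; simpl.
  - destruct (n =? j). apply star_one, sstep_lift; auto. destruct (j <? n); apply st_refl.
  - apply sstar_lam; auto.
  - eapply star_trans. apply sstar_appl; eauto. apply sstar_appr; eauto.
  - apply st_refl.
Qed.

Ltac sst := first [ apply ss_root; first [apply s1 | apply s3; auto using value_lift, val_lam, val_var]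
  | apply ss_lam; sst | apply ss_appl; sst | apply ss_appr; sst | assumption | apply sstep_lift; assumption].

Definition joinS b c := exists d, star sstep b d /\ star sstep c d.

Lemma lift11 : forall P, lift 1 1 (lift 1 0 P) = lift 1 0 (lift 1 0 P).
Proof. intros. apply (lift_lift_comm P 1 1 0 0). lia. Qed.

Lemma sstep_lam_inv : forall m x, sstep (Lam m) x -> exists m', x = Lam m' /\ sstep m m'.
Proof. intros m x H; inversion H; subst; eauto. inversion H0. Qed.

Lemma value_not_app : forall t u, is_value (App t u) -> False.
Proof. intros t u H; inversion H. Qed.

Lemma root_vs_step : forall a b c, sroot a b -> sstep a c -> joinS b c.
Proof.
  intros a b c Hr Hc. destruct Hr as [M N P | V M N HV].
  - inversion Hc; subst.
    + inversion H; subst. exists (App (Lam (App M (lift 1 0 P))) N); split; apply st_refl.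
      exfalso; eapply value_not_app; eauto.
    + inversion H2; subst.
      * inversion H; subst.
        exists (App (Lam (App (Lam (App (lift 1 1 M) (lift 1 0 (lift 1 0 P)))) M0)) N0).
        split.
        -- eapply st_step. apply ss_root. apply (s3 (Lam (App M (lift 1 0 P)))). constructor.
           simpl. rewrite lift11. apply st_refl.
        -- eapply st_step. apply ss_root; apply s1. simpl.
           eapply st_step. apply ss_appl, ss_lam, ss_root, s1. apply st_refl.
      * destruct (sstep_lam_inv _ _ H3) as [m' [-> Hm]].
        exists (App (Lam (App m' (lift 1 0 P))) N); split; apply star_one; sst.
      * exists (App (Lam (App M (lift 1 0 P))) u0); split; apply star_one; sst.
    + exists (App (Lam (App M (lift 1 0 u))) N); split; apply star_one; sst.
  - inversion Hc; subst.
    + inversion H; subst. exfalso; eapply value_not_app; eauto.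
      exists (App (Lam (App (lift 1 0 V) M)) N); split; apply st_refl.
    + exists (App (Lam (App (lift 1 0 u) M)) N); split; apply star_one; sst.
      eapply value_sstep; eauto.
    + inversion H2; subst.
      * inversion H; subst.
        exists (App (Lam (App (Lam (App (lift 1 0 (lift 1 0 V)) (lift 1 1 M))) M0)) N0).
        split.
        -- eapply st_step. apply ss_root. apply (s3 (Lam (App (lift 1 0 V) M))). constructor.
           simpl. rewrite lift11. apply st_refl.
        -- eapply st_step. apply ss_root; apply s3; auto. simpl.
           eapply st_step. apply ss_appl, ss_lam, ss_root, s3. apply value_lift; auto.
           apply st_refl.
      * destruct (sstep_lam_inv _ _ H3) as [m' [-> Hm]].
        exists (App (Lam (App (lift 1 0 V) m')) N); split; apply star_one; sst.
      * exists (App (Lam (App (lift 1 0 V) M)) u0); split; apply star_one; sst.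
Qed.

Lemma sstep_local : forall a b c, sstep a b -> sstep a c -> joinS b c.
Proof.
  intros a b c H; revert c; induction H; intros c Hc.
  - eapply root_vs_step; eauto.
  - inversion Hc; subst.
    + inversion H0.
    + destruct (IHsstep _ H1) as [d [? ?]]. exists (Lam d); split; apply sstar_lam; auto.
  - inversion Hc; subst.
    + destruct (root_vs_step _ _ _ H0 (ss_appl _ _ _ H)) as [d [? ?]]. exists d; auto.
    + destruct (IHsstep _ H3) as [d [? ?]]. exists (App d s); split; apply sstar_appl; auto.
    + exists (App u u0); split; apply star_one; [apply ss_appr | apply ss_appl]; auto.
  - inversion Hc; subst.
    + destruct (root_vs_step _ _ _ H0 (ss_appr _ _ _ H)) as [d [? ?]]. exists d; auto.
    + exists (App u0 u); split; apply star_one; [apply ss_appl | apply ss_appr]; auto.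
    + destruct (IHsstep _ H3) as [d [? ?]]. exists (App s d); split; apply sstar_appr; auto.
Qed.

Lemma newman {A} (R : A -> A -> Prop) (f : A -> nat) :
  (forall x y, R x y -> f y < f x) ->
  (forall a b c, R a b -> R a c -> exists d, star R b d /\ star R c d) ->
  forall a b c, star R a b -> star R a c -> exists d, star R b d /\ star R c d.
Proof.
  intros Hf Hl.
  assert (forall n a, f a = n -> forall b c, star R a b -> star R a c -> exists d, star R b d /\ star R c d).
  { intro n. induction n as [n IH] using lt_wf_ind. intros a Ha b c Hb Hc.
    destruct Hb as [|a b1 b Hab1 Hb1b]. { exists c; split; auto using st_refl. }
    destruct Hc as [|a c1 c Hac1 Hc1c]. { exists b; split; eauto using st_refl, st_step. }
    destruct (Hl _ _ _ Hab1 Hac1) as [d1 [Hb1d1 Hc1d1]].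
    destruct (IH (f b1)) with (a := b1) (b := b) (c := d1) as [e [Hbe Hd1e]]; auto.
    { subst; apply Hf; auto. }
    destruct (IH (f c1)) with (a := c1) (b := c) (c := e) as [g [Hcg Heg]]; auto.
    { subst; apply Hf; auto. }
    { eapply star_trans; eauto. }
    exists g; split; auto. eapply star_trans; eauto. }
  intros; eapply H; eauto.
Qed.

Lemma sstar_confluent : forall a b c, star sstep a b -> star sstep a c ->
  exists d, star sstep b d /\ star sstep c d.
Proof. apply (newman sstep msr). apply sstep_dec. apply sstep_local. Qed.

Lemma diamond_confluent {A} (R : A -> A -> Prop) :
  (forall a b c, R a b -> R a c -> exists d, R b d /\ R c d) ->
  forall a b c, star R a b -> star R a c -> exists d, star R b d /\ star R c d.
Proof.
  intros Hd.
  assert (strip : forall a b c, R a b -> star R a c -> exists d, star R b d /\ R c d).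
  { intros a b c Hab Hac; revert b Hab; induction Hac as [|x y z Hxy Hyz IH]; intros b Hab.
    - exists b; split; auto using st_refl.
    - destruct (Hd _ _ _ Hab Hxy) as [d1 [Hbd1 Hyd1]].
      destruct (IH _ Hyd1) as [d [? ?]]. exists d; split; eauto using st_step. }
  intros a b c Hab; revert c; induction Hab as [|x y z Hxy Hyz IH]; intros c Hac.
  - exists c; split; auto using st_refl.
  - destruct (strip _ _ _ Hxy Hac) as [d1 [Hyd1 Hcd1]].
    destruct (IH _ Hyd1) as [d [? ?]]. exists d; split; eauto using st_step.
Qed.

Lemma parstar_confluent : forall a b c, star par a b -> star par a c ->
  exists d, star par b d /\ star par c d.
Proof. apply diamond_confluent. apply par_diamond. Qed.

Lemma commute1 : forall a b, par a b -> forall c, sstep a c ->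
  exists d, star sstep b d /\ par c d.
Proof.
  induction 1; intros c Hc.
  - inversion Hc; subst. inversion H.
  - inversion Hc; subst. inversion H.
  - destruct (sstep_lam_inv _ _ Hc) as [m2 [-> Hm]].
    destruct (IHpar _ Hm) as [d [? ?]]. exists (Lam d); split. apply sstar_lam; auto. constructor; auto.
  - inversion Hc; subst.
    + inversion H1; subst.
      * inversion H; subst.
        -- destruct (par_lam_inv _ _ H4) as [m1 [-> Hm1]].
           exists (App (Lam (App m1 (lift 1 0 u'))) u'0); split.
           apply star_one; apply ss_root; apply s1.
           apply p_app; [|auto]. apply p_lam. apply p_app; auto. apply par_lift; auto.
        -- exists (App (subst 0 v' m') u'); split. apply st_refl.
           replace (App (subst 0 v' m') u') with (subst 0 v' (App m' (lift 1 0 u'))).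
           apply p_beta; auto. apply p_app; auto. apply par_lift; auto.
           simpl. f_equal. rewrite (subst_lift_cancel u' v' 0 0 0) by lia. apply lift0.
      * inversion H0; subst.
        -- destruct (par_lam_inv _ _ H4) as [m1 [-> Hm1]].
           exists (App (Lam (App (lift 1 0 t') m1)) u'0); split.
           apply star_one; apply ss_root; apply s3. eapply value_par; eauto.
           apply p_app; [|auto]. apply p_lam. apply p_app; auto. apply par_lift; auto.
        -- exists (App t' (subst 0 v' m')); split. apply st_refl.
           replace (App t' (subst 0 v' m')) with (subst 0 v' (App (lift 1 0 t') m')).
           apply p_beta; auto. apply p_app; auto. apply par_lift; auto.
           simpl. f_equal. rewrite (subst_lift_cancel t' v' 0 0 0) by lia. apply lift0.
    + destruct (IHpar1 _ H4) as [d [? ?]]. exists (App d u'); split.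
      apply sstar_appl; auto. constructor; auto.
    + destruct (IHpar2 _ H4) as [d [? ?]]. exists (App t' d); split.
      apply sstar_appr; auto. constructor; auto.
  - inversion Hc; subst.
    + inversion H2; subst. exfalso; eapply value_not_app; eauto.
    + destruct (sstep_lam_inv _ _ H5) as [m2 [-> Hm]].
      destruct (IHpar1 _ Hm) as [d [? ?]]. exists (subst 0 v' d); split.
      * apply (star_map sstep sstep (subst 0 v')); auto. intros; apply sstep_subst; auto.
        eapply value_par; eauto.
      * constructor; auto.
    + destruct (IHpar2 _ H5) as [d [? ?]]. exists (subst 0 d m'); split.
      * clear -H2. induction H2. apply st_refl. eapply star_trans; [|eauto].
        apply sstep_subst_arg; auto.
      * constructor; auto. eapply value_sstep; eauto.
Qed.

Lemma commute2 : forall a c, star sstep a c -> forall b, par a b ->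
  exists d, star sstep b d /\ par c d.
Proof.
  induction 1; intros b Hb.
  - exists b; split; auto using st_refl.
  - destruct (commute1 _ _ Hb _ H) as [d1 [? ?]].
    destruct (IHstar _ H2) as [d [? ?]]. exists d; split; auto. eapply star_trans; eauto.
Qed.

Lemma commute3 : forall a b, star par a b -> forall c, star sstep a c ->
  exists d, star sstep b d /\ star par c d.
Proof.
  induction 1; intros c Hc.
  - exists c; split; auto using st_refl.
  - destruct (commute2 _ _ Hc _ H) as [d1 [? ?]].
    destruct (IHstar _ H1) as [d [? ?]]. exists d; split; eauto using st_step.
Qed.

Definition Z (x y : term) : Prop := star par x y \/ star sstep x y.

Lemma Z_diamond : forall a b c, Z a b -> Z a c -> exists d, Z b d /\ Z c d.
Proof.
  intros a b c [Hb|Hb] [Hc|Hc].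
  - destruct (parstar_confluent _ _ _ Hb Hc) as [d [? ?]]. exists d; split; left; auto.
  - destruct (commute3 _ _ Hb _ Hc) as [d [? ?]]. exists d; split; [right|left]; auto.
  - destruct (commute3 _ _ Hc _ Hb) as [d [? ?]]. exists d; split; [left|right]; auto.
  - destruct (sstar_confluent _ _ _ Hb Hc) as [d [? ?]]. exists d; split; right; auto.
Qed.

Lemma vstep_split : forall t u, vstep t u -> par t u \/ sstep t u.
Proof.
  induction 1.
  - destruct H.
    + left. apply p_beta; auto using par_refl.
    + right. apply ss_root, s1.
    + right. apply ss_root, s3; auto.
  - destruct IHvstep; [left; apply p_lam | right; apply ss_lam]; auto.
  - destruct IHvstep; [left; apply p_app | right; apply ss_appl]; auto using par_refl.
  - destruct IHvstep; [left; apply p_app | right; apply ss_appr]; auto using par_refl.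
Qed.

Lemma vred_lam : forall t u, vred t u -> vred (Lam t) (Lam u).
Proof. induction 1. apply rt_step; apply vs_lam; auto. apply rt_refl. eapply rt_trans; eauto. Qed.
Lemma vred_appl : forall t u s, vred t u -> vred (App t s) (App u s).
Proof. induction 1. apply rt_step; apply vs_appl; auto. apply rt_refl. eapply rt_trans; eauto. Qed.
Lemma vred_appr : forall t u s, vred t u -> vred (App s t) (App s u).
Proof. induction 1. apply rt_step; apply vs_appr; auto. apply rt_refl. eapply rt_trans; eauto. Qed.

Lemma par_vred : forall t u, par t u -> vred t u.
Proof.
  induction 1; try apply rt_refl.
  - apply vred_lam; auto.
  - eapply rt_trans. apply vred_appl; eauto. apply vred_appr; auto.
  - eapply rt_trans. apply vred_appl, vred_lam; eauto.
    eapply rt_trans. apply vred_appr; eauto.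
    apply rt_step, vs_root, r_betav. eapply value_par; eauto.
Qed.

Lemma sstep_vstep : forall t u, sstep t u -> vstep t u.
Proof.
  induction 1.
  - destruct H; apply vs_root; constructor; auto.
  - apply vs_lam; auto.
  - apply vs_appl; auto.
  - apply vs_appr; auto.
Qed.

Lemma star_vred : forall R, (forall x y, R x y -> vred x y) -> forall x y, star R x y -> vred x y.
Proof. intros R HR x y H; induction H. apply rt_refl. eapply rt_trans; [apply HR; eauto | eauto]. Qed.

Lemma Zstar_vred : forall x y, star Z x y -> vred x y.
Proof. apply star_vred. intros x y [H|H].
  apply (star_vred par); auto. apply par_vred.
  apply (star_vred sstep); auto. intros; apply rt_step, sstep_vstep; auto. Qed.

Lemma vred_Zstar : forall x y, vred x y -> star Z x y.
Proof.
  intros x y H; apply clos_rt_rt1n in H; induction H. apply st_refl.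
  eapply st_step; eauto. destruct (vstep_split _ _ H); [left|right]; apply star_one; auto.
Qed.

Lemma vred_confluent : forall a b c, vred a b -> vred a c -> exists d, vred b d /\ vred c d.
Proof.
  intros a b c Hb Hc.
  destruct (diamond_confluent Z Z_diamond _ _ _ (vred_Zstar _ _ Hb) (vred_Zstar _ _ Hc)) as [d [? ?]].
  exists d; split; apply Zstar_vred; auto.
Qed.

Lemma veq_join : forall a b, veq a b -> exists d, vred a d /\ vred b d.
Proof.
  induction 1.
  - exists y; split; [apply rt_step; auto | apply rt_refl].
  - exists x; split; apply rt_refl.
  - destruct IHclos_refl_sym_trans as [d [? ?]]; eauto.
  - destruct IHclos_refl_sym_trans1 as [d1 [? ?]].
    destruct IHclos_refl_sym_trans2 as [d2 [? ?]].
    destruct (vred_confluent _ _ _ H2 H3) as [d [? ?]].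
    exists d; split; eapply rt_trans; eauto.
Qed.

Lemma nobot_lift : forall t k c, nobot t -> nobot (lift k c t).
Proof. induction t; intros; simpl in *; auto. destruct (n <? c); simpl; auto. destruct H; split; auto. Qed.
Lemma nobot_subst : forall t s j, nobot t -> nobot s -> nobot (subst j s t).
Proof. induction t; intros; simpl in *; auto.
  destruct (n =? j). apply nobot_lift; auto. destruct (j <? n); simpl; auto. destruct H; split; auto. Qed.
Lemma nobot_vstep : forall t u, vstep t u -> nobot t -> nobot u.
Proof.
  induction 1; intros Hn; simpl in *; try tauto.
  destruct H; simpl in *.
  - apply nobot_subst; tauto.
  - pose proof (nobot_lift P 1 0); tauto.
  - pose proof (nobot_lift V 1 0); tauto.
Qed.
Lemma nobot_vred : forall t u, vred t u -> nobot t -> nobot u.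
Proof. induction 1; eauto using nobot_vstep. Qed.

Inductive le' : term -> term -> Prop :=
| l_botbot : le' Bot Bot
| l_botvar : forall n, le' Bot (Var n)
| l_botlam : forall t, le' Bot (Lam t)
| l_var : forall n, le' (Var n) (Var n)
| l_lam : forall t u, le' t u -> le' (Lam t) (Lam u)
| l_app : forall t t' u u', le' t t' -> le' u u' -> le' (App t u) (App t' u').

Lemma le'_refl : forall t, le' t t.
Proof. induction t; constructor; auto. Qed.
Lemma le'_trans : forall t u v, le' t u -> le' u v -> le' t v.
Proof. intros t u v H; revert v; induction H; intros v Hv; inversion Hv; subst; constructor; auto. Qed.
Lemma approx_le' : forall t u, approx_le t u -> le' t u.
Proof. induction 1; try constructor; auto using le'_refl, le'_refl. eapply le'_trans; eauto. Qed.
Lemma le'_approx : forall t u, le' t u -> approx_le t u.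
Proof.
  induction 1.
  - apply al_refl.
  - apply al_bot_var.
  - apply al_bot_lam.
  - apply al_refl.
  - apply al_lam; auto.
  - eapply al_trans. apply al_appl; eauto. apply al_appr; auto.
Qed.

Lemma isA_app_inv : forall a1 a2, is_A (App a1 a2) ->
  is_A a1 /\ is_A a2 /\
  (((exists n, a1 = Var n) /\ is_B a2) \/ ((exists m, a1 = Lam m) /\ is_head a2) \/ is_head a1).
Proof.
  intros a1 a2 H. inversion H; subst.
  - inversion H0; subst. inversion H1; subst.
    + repeat split; [do 2 constructor | constructor; auto | left; eauto].
    + repeat split; [constructor; apply B_head; auto | auto | right; right; auto].
  - repeat split; [do 2 constructor; auto | constructor; apply B_head; auto | right; left; eauto].
Qed.

Lemma isA_lam_inv : forall a, is_A (Lam a) -> is_A a.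
Proof. intros a H; inversion H; subst. inversion H0; subst; auto. inversion H1. Qed.

Lemma head_shape : forall h, is_head h -> exists x y, h = App x y /\ ((exists n, x = Var n) \/ is_head x).
Proof. intros h H; inversion H; subst; eauto 6. Qed.

Lemma isB_app : forall x y, is_B (App x y) -> is_head (App x y).
Proof. intros x y H; inversion H; auto. Qed.

Lemma head_not_le_lam : forall h m, is_head h -> le' h (Lam m) -> False.
Proof. intros h m H Hl. destruct (head_shape _ H) as [x [y [-> _]]]. inversion Hl. Qed.

Lemma le_app_inv : forall a t u, le' a (App t u) -> exists a1 a2, a = App a1 a2 /\ le' a1 t /\ le' a2 u.
Proof. intros a t u H; inversion H; subst; eauto. Qed.

Lemma le_value_shape : forall a v, is_value v -> le' a v -> a = Bot \/ is_value a.
Proof. intros a v Hv H; destruct Hv; inversion H; subst; auto; right; constructor. Qed.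

Lemma approx_stable : forall t u, vstep t u -> forall a, is_A a -> le' a t -> le' a u.
Proof.
  induction 1; intros a Ha Hle.
  - exfalso. destruct H.
    + destruct (le_app_inv _ _ _ Hle) as [a1 [a2 [-> [H1 H2]]]].
      destruct (isA_app_inv _ _ Ha) as [_ [_ Hs]].
      destruct (le_value_shape _ _ H H2) as [->|Hv2].
      * destruct Hs as [[[n ->] _]|[[[m ->] Hh]|Hh]].
        -- inversion H1.
        -- inversion Hh.
        -- exact (head_not_le_lam _ _ Hh H1).
      * destruct Hs as [[[n ->] _]|[[[m ->] Hh]|Hh]].
        -- inversion H1.
        -- destruct (head_shape _ Hh) as [x [y [-> _]]]; inversion Hv2.
        -- exact (head_not_le_lam _ _ Hh H1).
    + destruct (le_app_inv _ _ _ Hle) as [a1 [a2 [-> [H1 H2]]]].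
      destruct (le_app_inv _ _ _ H1) as [a11 [a12 [-> [H11 H12]]]].
      destruct (isA_app_inv _ _ Ha) as [_ [_ Hs]].
      destruct Hs as [[[n Hn] _]|[[[m Hm] Hh]|Hh]]; try discriminate.
      destruct (head_shape _ Hh) as [x [y [Heq [[n ->]|Hx]]]]; injection Heq as -> ->.
      inversion H11. eapply head_not_le_lam; eauto.
    + destruct (le_app_inv _ _ _ Hle) as [a1 [a2 [-> [H1 H2]]]].
      destruct (le_app_inv _ _ _ H2) as [a21 [a22 [-> [H21 H22]]]].
      destruct (isA_app_inv _ _ Ha) as [_ [_ Hs]].
      destruct Hs as [[[n ->] HB]|[[[m ->] Hh]|Hh]].
      * apply isB_app in HB. destruct (head_shape _ HB) as [x [y [Heq [[k ->]|Hx]]]]; injection Heq as -> ->.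
        inversion H21. eapply head_not_le_lam; eauto.
      * destruct (head_shape _ Hh) as [x [y [Heq [[k ->]|Hx]]]]; injection Heq as -> ->.
        inversion H21. eapply head_not_le_lam; eauto.
      * destruct (head_shape _ Hh) as [x [y [-> _]]].
        destruct (le_value_shape _ _ H H1) as [Hb|Hv]; [discriminate|inversion Hv].
  - inversion Hle; subst. constructor. constructor. apply IHvstep; auto. apply isA_lam_inv; auto.
  - destruct (le_app_inv _ _ _ Hle) as [a1 [a2 [-> [H1 H2]]]].
    destruct (isA_app_inv _ _ Ha) as [? [? _]]. constructor; auto.
  - destruct (le_app_inv _ _ _ Hle) as [a1 [a2 [-> [H1 H2]]]].
    destruct (isA_app_inv _ _ Ha) as [? [? _]]. constructor; auto.
Qed.

Lemma approx_stable_red : forall t u, vred t u -> forall a, is_A a -> le' a t -> le' a u.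
Proof. induction 1; eauto using approx_stable. Qed.

Lemma BT_red : forall M P A, vred M P -> (BT M A <-> BT P A).
Proof.
  intros M P A HMP; unfold BT, approximants; split.
  - intros [HA [N [Hn [HMN Hle]]]].
    destruct (vred_confluent _ _ _ HMN HMP) as [Q [HNQ HPQ]].
    split; auto. exists Q; split; [|split]; auto.
    apply (nobot_vred N Q HNQ Hn).
    apply le'_approx. apply (approx_stable_red N Q HNQ A HA). apply approx_le'; auto.
  - intros [HA [N [Hn [HPN Hle]]]]. split; auto. exists N; split; [|split]; auto.
    eapply rt_trans; eauto.
Qed.

Theorem proposition2p11 : forall M N : term,
  nobot M -> nobot N -> veq M N ->
  forall A : term, BT M A <-> BT N A.
Proof.
  intros M N _ _ H A. destruct (veq_join _ _ H) as [P [HM HN]].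
  rewrite (BT_red _ _ A HM), (BT_red _ _ A HN). reflexivity.
Qed.
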